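(* Let $G=(V,E)$ be a finite undirected graph with $V=\{1,\dots,p\}$. Then the following are equivalent: (i) for every symmetric positive definite $p\times p$ real matrix $A$, the thresholded matrix $A_G$ is positive definite; (ii) $G=\bigcup_{i=1}^{\tau} G_i$ for some $\tau\in\mathbb{N}$, where $G_1,\dots,G_\tau$ are pairwise disconnected complete graphs (equivalently, every connected component of $G$ is a complete graph).
   Context: For a symmetric $p\times p$ real matrix $A=(a_{ij})$ and an undirected graph $G=(V,E)$ on $V=\{1,\dots,p\}$, the matrix $A_G$ obtained by thresholding $A$ with respect to $G$ is defined by $(A_G)_{ij}=a_{ij}$ if $i=j$ or $(i,j)\in E$, and $(A_G)_{ij}=0$ otherwise. *)

(* Defs.v *)
From HB Require Import structures.
From mathcomp Require Import all_boot all_order all_algebra.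
From mathcomp Require Import reals.
Set Implicit Arguments. Unset Strict Implicit. Unset Printing Implicit Defensive.
Import Order.TTheory GRing.Theory Num.Theory.
Local Open Scope ring_scope.

(* A finite simple undirected graph on vertex set 'I_p (= {1,...,p} shifted
   to {0,...,p-1}) is given by a symmetric irreflexive edge relation. *)
Definition simple_graph (p : nat) (e : rel 'I_p) : Prop :=
  symmetric e /\ irreflexive e.

Definition posdef (R : realType) (p : nat) (A : 'M[R]_p) : Prop :=
  A^T = A /\ forall x : 'cV[R]_p, x != 0 -> 0 < (x^T *m A *m x) 0 0.

Definition threshold (R : realType) (p : nat) (e : rel 'I_p) (A : 'M[R]_p)
  : 'M[R]_p :=
  \matrix_(i, j) (if (i == j) || e i j then A i j else 0).

Definition components_complete (p : nat) (e : rel 'I_p) : Prop :=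
  forall i j : 'I_p, connect e i j -> i != j -> e i j.

(* Main.v *)
Require Import Defs.
From HB Require Import structures.
From mathcomp Require Import all_boot all_order all_algebra.
From mathcomp Require Import reals.
From mathcomp Require Import ring lra.
Import Order.TTheory GRing.Theory Num.Theory.
Local Open Scope ring_scope.

Lemma qform (R : realType) (p : nat) (A : 'M[R]_p) (x : 'cV[R]_p) :
  (x^T *m A *m x) 0 0 = \sum_i \sum_j x i 0 * A i j * x j 0.
Proof.
rewrite mxE [RHS]exchange_big /=; apply: eq_bigr => j _.
rewrite mxE big_distrl /=; apply: eq_bigr => i _.
by rewrite !mxE.
Qed.

Lemma sdelta (R : realType) (p : nat) (a : 'I_p) (f : 'I_p -> R) :
  \sum_i (i == a)%:R * f i = f a.
Proof.
rewrite (bigD1 a) //= eqxx mul1r big1 ?addr0 // => i /negbTE ->.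
by rewrite mul0r.
Qed.

Lemma sumsq_gt0 (R : realType) (p : nat) (x : 'cV[R]_p) :
  x != 0 -> 0 < \sum_i x i 0 * x i 0.
Proof.
move=> nx.
have [i xi] : exists i, x i 0 != 0.
  apply/existsP; apply: contraR nx; rewrite negb_exists => /forallP H.
  apply/eqP/matrixP => i j; rewrite mxE (ord1 j); exact/eqP/negPn/H.
rewrite (bigD1 i) //=.
have h1 : 0 < x i 0 * x i 0 by rewrite -expr2 lt_def sqr_ge0 andbT sqrf_eq0.
have h2 : 0 <= \sum_(j | j != i) x j 0 * x j 0.
  by apply: sumr_ge0 => j _; rewrite -expr2 sqr_ge0.
lra.
Qed.

Lemma nz_coord (R : realType) (p : nat) (x : 'cV[R]_p) :
  x != 0 -> exists i, x i 0 != 0.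
Proof.
move=> nx; apply/existsP; apply: contraR nx; rewrite negb_exists => /forallP H.
apply/eqP/matrixP => i j; rewrite mxE (ord1 j); exact/eqP/negPn/H.
Qed.

Lemma s3 (R : realType) (p : nat) (a b c : 'I_p) (f : 'I_p -> R) :
  \sum_i ((i == a)%:R - (i == b)%:R + (i == c)%:R) * f i = f a - f b + f c.
Proof.
under eq_bigr do rewrite mulrDl mulrBl.
by rewrite big_split sumrB /= !sdelta.
Qed.

Lemma path_adj (p : nat) (e : rel 'I_p) :
  (forall a b c, e a b -> e b c -> a != c -> e a c) ->
  forall s i, path e i s -> i != last i s -> e i (last i s).
Proof.
move=> T; elim=> [|k s IH] i /=; first by rewrite eqxx.
case/andP=> eik pks nil.
case: (eqVneq k (last k s)) => [<- // | nk].
exact: T eik (IH _ pks nk) nil.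
Qed.

Lemma dir2 (R : realType) (p : nat) (e : rel 'I_p) :
  symmetric e -> components_complete e ->
  forall A : 'M[R]_p, posdef A -> posdef (threshold e A).
Proof.
move=> sym cc A [At Apd]; have cs := sym_connect_sym sym.
have key : forall i j, ((i == j) || e i j) = (fingraph.root e i == fingraph.root e j).
  move=> i j; rewrite (root_connect cs); apply/idP/idP.
    by case/orP => [/eqP -> | h]; [exact: connect0 | exact: connect1].
  by move=> c; case: eqVneq => //= nij; exact: cc.
split.
  apply/matrixP => i j; rewrite !mxE !key eq_sym.
  by rewrite -{1}At mxE.
move=> x nx; rewrite qform.
pose y k := \col_i (x i 0 * (fingraph.root e i == k)%:R) : 'cV[R]_p.
have -> : \sum_i \sum_j x i 0 * threshold e A i j * x j 0 =
          \sum_k ((y k)^T *m A *m y k) 0 0.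
  under [RHS]eq_bigr do rewrite qform.
  rewrite [RHS]exchange_big; apply: eq_bigr => i _.
  rewrite [RHS]exchange_big; apply: eq_bigr => j _ /=.
  under eq_bigr do rewrite !mxE.
  rewrite !mxE key (bigD1 (fingraph.root e i)) //= eqxx mulr1 big1 ?addr0.
    case: eqP => [-> | /eqP n]; first by rewrite eqxx mulr1.
    by rewrite eq_sym (negbTE n) !mulr0 mul0r.
  by move=> k nk; rewrite (eq_sym (fingraph.root e i)) (negbTE nk) mulr0 !mul0r.
have [i0 xi0] := (@nz_coord _ _ _ nx).
rewrite (bigD1 (fingraph.root e i0)) //=.
have h1 : 0 < ((y (fingraph.root e i0))^T *m A *m y (fingraph.root e i0)) 0 0.
  apply: Apd; apply/negP => /eqP/matrixP/(_ i0 0).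
  rewrite !mxE eqxx mulr1 => h; by rewrite h eqxx in xi0.
have h2 : 0 <= \sum_(k | k != fingraph.root e i0) (((y k)^T *m A *m y k) 0 0).
  apply: sumr_ge0 => k _; case: (eqVneq (y k) 0) => [-> | nz].
    by rewrite trmx0 mul0mx mul0mx mxE.
  exact/ltW/Apd.
lra.
Qed.

Lemma dir1 (R : realType) (p : nat) (e : rel 'I_p) :
  simple_graph e ->
  (forall A : 'M[R]_p, posdef A -> posdef (threshold e A)) ->
  components_complete e.
Proof.
move=> [sym irr] H.
have T : forall a b c, e a b -> e b c -> a != c -> e a c.
  move=> a b c ab bc ac; apply/negPn/negP => nac.
  have ab' : a != b by apply: contraTneq ab => ->; rewrite irr.
  have bc' : b != c by apply: contraTneq bc => ->; rewrite irr.
  pose u i := ((i == a) || (i == b) || (i == c))%:R : R.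
  pose A := \matrix_(i, j) ((i == j)%:R + 4 * u i * u j) : 'M[R]_p.
  have PA : posdef A.
    split.
      by apply/matrixP => i j; rewrite !mxE eq_sym mulrAC.
    move=> x nx; rewrite qform.
    have -> : \sum_i \sum_j x i 0 * A i j * x j 0 =
        \sum_i x i 0 * x i 0 + 4 * (\sum_i x i 0 * u i) ^+ 2.
      rewrite expr2 big_distrl /= big_distrr /= -big_split /=; apply: eq_bigr => i _.
      rewrite !big_distrr /= [LHS](bigD1 i) //= [X in _ = _ + X](bigD1 i) //= !mxE eqxx.
      rewrite (eq_bigr (fun j => 4 * (x i 0 * u i * (x j 0 * u j)))) => [|j nj]; last first.
        by rewrite mxE eq_sym (negbTE nj) add0r; ring.
      rewrite /= mulr1n; ring.
    have h1 := @sumsq_gt0 _ _ x nx.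
    have h2 : 0 <= (\sum_i x i 0 * u i) ^+ 2 by apply: sqr_ge0.
    lra.
  have [_ /(_ (\col_i ((i == a)%:R - (i == b)%:R + (i == c)%:R)))] := H A PA.
  have ba : (b == a) = false by rewrite eq_sym (negbTE ab').
  have cb : (c == b) = false by rewrite eq_sym (negbTE bc').
  have ca : (c == a) = false by rewrite eq_sym (negbTE ac).
  have eac : e a c = false by apply/negbTE.
  have eca : e c a = false by rewrite sym.
  have eba : e b a by rewrite sym.
  have ecb : e c b by rewrite sym.
  have nx0 : \col_i ((i == a)%:R - (i == b)%:R + (i == c)%:R) != 0 :> 'cV[R]_p.
    apply/negP => /eqP/matrixP/(_ a 0); rewrite !mxE eqxx (negbTE ab') (negbTE ac) => /eqP.
    by rewrite subr0 addr0 oner_eq0.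
  move=> /(_ nx0); rewrite qform; apply/negP; rewrite -leNgt.
  under eq_bigr => i _ do under eq_bigr => j _ do rewrite !mxE mulrC.
  under eq_bigr => i _ do rewrite s3.
  under eq_bigr => i _ do rewrite -mulrBr -mulrDr.
  rewrite s3 !eqxx (negbTE ab') (negbTE ac) (negbTE bc') ba ca cb eac eca ab bc eba ecb irr /=.
  have ua : u a = 1 by rewrite /u eqxx.
  have ub : u b = 1 by rewrite /u eqxx orbT.
  have uc : u c = 1 by rewrite /u eqxx !orbT.
  rewrite ua ub uc; lra.
move=> i j /connectP [s pth ->] nij.
exact: path_adj T s i pth nij.
Qed.

Theorem theorem3 (R : realType) (p : nat) (e : rel 'I_p) :
  simple_graph e ->
  ((forall A : 'M[R]_p, posdef A -> posdef (threshold e A)) <->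
   components_complete e).
Proof.
move=> sg; split; first exact: dir1.
by case: sg => sym _; exact: dir2.
Qed.
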